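(* Let $G$ be a group, $\mathcal{P}$ a collection of infinite subgroups of $G$, and $X\subseteq G$ with $\mathcal{P}\hookrightarrow_h(G,X)$. Let $\hat\Gamma_0=\hat\Gamma(G,\mathcal{P},X)$ and let $Y\subseteq G$ be finite. Let $\hat\Gamma=\hat\Gamma_0\cup(\Gamma(G,X\cup Y)\setminus\Gamma(G,X))$, i.e. $\hat\Gamma_0$ with all edges $\{g,gy\}$, $g\in G$, $y\in Y$, added. Then $\hat\Gamma_0$ is quasi-isometric to $\hat\Gamma$. Moreover, if $\hat\Gamma_0$ is a $(G,\mathcal{P})$--graph (respectively a thick $(G,\mathcal{P})$--graph), then so is $\hat\Gamma$.
   Context: $\Gamma(G,Z)$ is the Cayley graph of $G$ with respect to $Z$. Coned-off Cayley graph $\hat\Gamma(G,\mathcal{P},X)$: vertex set $G\sqcup\bigsqcup_{P\in\mathcal{P}}G/P$, edges $\{g,gx\}$ ($x\in X$) and $\{g,gP\}$. $\mathcal{P}\hookrightarrow_h(G,X)$ means: $G=\langle X\cup\bigcup\mathcal{P}\rangle$, the Cayley graph with respect to $X\sqcup\bigsqcup\mathcal{P}$ is hyperbolic, and each $P\in\mathcal{P}$ is locally finite for the metric $\hat d_P(h,k)$ = length of a shortest path from $h$ to $k$ in that Cayley graph using no edge labelled by an element of $P$ with both endpoints in $P$. A graph is fine at $v$ if the angle metric $\angle_v(x,y)$ (length of a shortest path between neighbours $x,y$ of $v$ avoiding $v$) is locally finite. A $(G,\mathcal{P})$--graph: connected hyperbolic $G$-graph, finitely many vertex orbits, vertex stabilizers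 finite or conjugates of members of $\mathcal{P}$ (each $P\in\mathcal{P}$ being some vertex stabilizer), finite edge stabilizers, fine at vertices with infinite stabilizer. It is thick (with $\mathcal{P}=\{P_1,\dots,P_n\}$) if it contains vertices $u_0,v_1,\dots,v_n$ with trivial stabilizer of $u_0$, edges $\{u_0,v_k\}$, stabilizer of $v_k$ equal to $P_k$; there is a finite relative generating set $S$ with edges $\{u_0,s.u_0\}$; and there are representatives $u_0,\dots,u_l$ of the orbits of vertices with finite stabilizer with edges $\{u_0,u_j\}$. *)

(* Defs.v *)
From Stdlib Require Import List Arith.
Import ListNotations.

Record Grp := {
  gcar :> Type;
  gmul : gcar -> gcar -> gcar;
  gone : gcar;
  ginv : gcar -> gcar;
  gassoc : forall x y z, gmul x (gmul y z) = gmul (gmul x y) z;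
  gmul1l : forall x, gmul gone x = x;
  gmul1r : forall x, gmul x gone = x;
  gmulVl : forall x, gmul (ginv x) x = gone;
  gmulVr : forall x, gmul x (ginv x) = gone
}.
Arguments gmul {g} _ _.
Arguments gone {g}.
Arguments ginv {g} _.

Definition finite_set {T : Type} (S : T -> Prop) : Prop :=
  exists l : list T, forall x, S x -> In x l.

Definition subgroup {G : Grp} (H : G -> Prop) : Prop :=
  H gone /\ (forall x y, H x -> H y -> H (gmul x y)) /\
  (forall x, H x -> H (ginv x)).

Definition generates {G : Grp} (A : G -> Prop) : Prop :=
  forall H : G -> Prop, subgroup H -> (forall a, A a -> H a) -> forall g, H g.

Fixpoint is_walk {V : Type} (adj : V -> V -> Prop) (u : V) (l : list V) : Prop :=
  match l with
  | [] => True
  | v :: l' => adj u v /\ is_walk adj v l'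
  end.

Definition reach_le {V : Type} (adj : V -> V -> Prop) (u v : V) (n : nat) : Prop :=
  exists l, is_walk adj u l /\ last l u = v /\ length l <= n.

(* l (the vertices after u) is a geodesic from u to v *)
Definition geodesic {V : Type} (adj : V -> V -> Prop) (u v : V) (l : list V) : Prop :=
  is_walk adj u l /\ last l u = v /\
  forall l', is_walk adj u l' -> last l' u = v -> length l <= length l'.

Definition connected {V : Type} (adj : V -> V -> Prop) : Prop :=
  forall u v, exists n, reach_le adj u v n.

Definition hyperbolic {V : Type} (adj : V -> V -> Prop) : Prop :=
  connected adj /\
  exists d : nat, forall x y z lxy lyz lzx,
    geodesic adj x y lxy -> geodesic adj y z lyz -> geodesic adj z x lzx ->
    forall w, In w (x :: lxy) ->
      exists w', (In w' (y :: lyz) \/ In w' (z :: lzx)) /\ reach_le adj w w' d.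

Definition quasi_isometric {V W : Type} (adjV : V -> V -> Prop)
    (adjW : W -> W -> Prop) : Prop :=
  exists (f : V -> W) (lam c : nat),
    (forall u v n, reach_le adjV u v n -> reach_le adjW (f u) (f v) (lam * n + c)) /\
    (forall u v n, reach_le adjW (f u) (f v) n -> reach_le adjV u v (lam * n + c)) /\
    (forall w, exists u, reach_le adjW (f u) w c).

(* fineness at v: the angle metric on the neighbours of v is locally finite *)
Definition avoid_adj {V : Type} (adj : V -> V -> Prop) (v : V) : V -> V -> Prop :=
  fun a b => adj a b /\ a <> v /\ b <> v.

Definition fine_at {V : Type} (adj : V -> V -> Prop) (v : V) : Prop :=
  forall x n, adj v x -> x <> v ->
    finite_set (fun y => adj v y /\ y <> v /\ reach_le (avoid_adj adj v) x y n).

Definition cay_adj {G : Grp} (Z : G -> Prop) (g h : G) : Prop :=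
  exists z, Z z /\ (h = gmul g z \/ g = gmul h z).

(* Letters of the alphabet X ⊔ ⊔_i P i : (None, x) is the letter x ∈ X,
   (Some i, p) is the letter p of the copy of P i; the boolean gives the
   direction in which the edge is traversed. *)
Definition letter_ok {G : Grp} {I : Type} (P : I -> G -> Prop) (X : G -> Prop)
    (o : option I) (z : G) : Prop :=
  match o with None => X z | Some j => P j z end.

Definition step {G : Grp} (cur z : G) (b : bool) : G :=
  if b then gmul cur z else gmul cur (ginv z).

(* admissible words for d^_i: no edge labelled by a letter of the copy of
   P i with both endpoints in P i *)
Fixpoint adm_word {G : Grp} {I : Type} (P : I -> G -> Prop) (X : G -> Prop)
    (i : I) (cur : G) (w : list (option I * G * bool)) : Prop :=
  match w with
  | [] => True
  | (o, z, b) :: w' =>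
      letter_ok P X o z /\ ~ (o = Some i /\ P i cur) /\
      adm_word P X i (step cur z b) w'
  end.

Fixpoint word_end {G : Grp} {I : Type} (cur : G) (w : list (option I * G * bool)) : G :=
  match w with
  | [] => cur
  | (_, z, b) :: w' => word_end (step cur z b) w'
  end.

Definition dhat_le {G : Grp} {I : Type} (P : I -> G -> Prop) (X : G -> Prop)
    (i : I) (h k : G) (n : nat) : Prop :=
  exists w, adm_word P X i h w /\ word_end h w = k /\ length w <= n.

Definition gen_all {G : Grp} {I : Type} (P : I -> G -> Prop) (X : G -> Prop) : G -> Prop :=
  fun g => X g \/ exists i, P i g.

Definition hyp_emb (G : Grp) (I : Type) (P : I -> G -> Prop) (X : G -> Prop) : Prop :=
  generates (gen_all P X) /\
  hyperbolic (cay_adj (gen_all P X)) /\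
  (forall i h n, P i h -> finite_set (fun k => P i k /\ dhat_le P X i h k n)).

Definition is_lcoset {G : Grp} (H : G -> Prop) (C : G -> Prop) : Prop :=
  exists a : G, forall h, C h <-> exists p, H p /\ h = gmul a p.

(* vertex set  G ⊔ ⊔_i G / P i  (left cosets as subsets of G) *)
Definition CVert (G : Grp) (I : Type) (P : I -> G -> Prop) : Type :=
  (G + { i : I & { C : G -> Prop | is_lcoset (P i) C } })%type.

Lemma lcoset_translate (G : Grp) (H : G -> Prop) (C : G -> Prop) (g : G) :
  is_lcoset H C -> is_lcoset H (fun h => C (gmul (ginv g) h)).
Proof.
  intros [a Ha]. exists (gmul g a). intro h. rewrite Ha. split.
  - intros [p [Hp E]]. exists p. split; [exact Hp|].
    rewrite <- gassoc, <- E, gassoc, gmulVr, gmul1l. reflexivity.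
  - intros [p [Hp E]]. exists p. split; [exact Hp|].
    rewrite E, gassoc, gassoc, gmulVl, gmul1l. reflexivity.
Qed.

Definition cact (G : Grp) (I : Type) (P : I -> G -> Prop) (g : G)
    (v : CVert G I P) : CVert G I P :=
  match v with
  | inl h => inl (gmul g h)
  | inr (existT _ i (exist _ C pf)) =>
      inr (existT _ i (exist _ (fun h => C (gmul (ginv g) h))
                         (lcoset_translate G (P i) C g pf)))
  end.

Definition coned_adj (G : Grp) (I : Type) (P : I -> G -> Prop) (X : G -> Prop)
    (u v : CVert G I P) : Prop :=
  match u, v with
  | inl g, inl h => exists x, X x /\ (h = gmul g x \/ g = gmul h x)
  | inl g, inr c => proj1_sig (projT2 c) g
  | inr c, inl g => proj1_sig (projT2 c) g
  | inr _, inr _ => False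
  end.

Definition coned_adj_plus (G : Grp) (I : Type) (P : I -> G -> Prop)
    (X Y : G -> Prop) (u v : CVert G I P) : Prop :=
  coned_adj G I P X u v \/
  match u, v with
  | inl g, inl h => exists y, Y y /\ (h = gmul g y \/ g = gmul h y)
  | _, _ => False
  end.

Definition stab {G : Grp} {V : Type} (act : G -> V -> V) (v : V) : G -> Prop :=
  fun g => act g v = v.

Definition edge_stab {G : Grp} {V : Type} (act : G -> V -> V) (u v : V) : G -> Prop :=
  fun g => (act g u = u /\ act g v = v) \/ (act g u = v /\ act g v = u).

Definition GP_graph (G : Grp) (I : Type) (P : I -> G -> Prop) (V : Type)
    (act : G -> V -> V) (adj : V -> V -> Prop) : Prop :=
  (forall v, act gone v = v) /\
  (forall g h v, act (gmul g h) v = act g (act h v)) /\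
  (forall g u v, adj u v <-> adj (act g u) (act g v)) /\
  hyperbolic adj /\
  (exists l : list V, forall v, exists u g, In u l /\ v = act g u) /\
  (forall v, finite_set (stab act v) \/
     exists i a, forall g, stab act v g <-> exists p, P i p /\ g = gmul (gmul a p) (ginv a)) /\
  (forall i, exists v, forall g, stab act v g <-> P i g) /\
  (forall u v, adj u v -> finite_set (edge_stab act u v)) /\
  (forall v, ~ finite_set (stab act v) -> fine_at adj v).

Definition thick_GP_graph (G : Grp) (I : Type) (P : I -> G -> Prop) (V : Type)
    (act : G -> V -> V) (adj : V -> V -> Prop) : Prop :=
  GP_graph G I P V act adj /\
  (exists lI : list I, forall i, In i lI) /\
  exists u0 : V,
    (forall g, act g u0 = u0 -> g = gone) /\
    (forall i, exists v, adj u0 v /\ forall g, stab act v g <-> P i g) /\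
    (exists S : list G,
        generates (fun g => In g S \/ exists i, P i g) /\
        forall s, In s S -> adj u0 (act s u0)) /\
    (exists reps : list V,
        In u0 reps /\
        (forall u, In u reps -> finite_set (stab act u)) /\
        (forall v, finite_set (stab act v) -> exists u g, In u reps /\ v = act g u) /\
        (forall u w g, In u reps -> In w reps -> w = act g u -> u = w) /\
        (forall u, In u reps -> u <> u0 -> adj u0 u)).

(* Main.v *)
Require Import Defs.
From Stdlib Require Import List Arith Lia ClassicalEpsilon Classical.
Import ListNotations.

Section Walks.
Context {V : Type} (adj : V -> V -> Prop).

Lemma last_cons' : forall (l : list V) a d, last (a :: l) d = last l a.
Proof.
  induction l as [|b l IH]; intros a d; [reflexivity|].
  change (last (a :: b :: l) d) with (last (b :: l) d). rewrite !IH. reflexivity.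
Qed.

Lemma last_app' : forall (l1 l2 : list V) d, last (l1 ++ l2) d = last l2 (last l1 d).
Proof.
  induction l1 as [|a l1 IH]; intros l2 d; [reflexivity|].
  rewrite <- app_comm_cons, !last_cons'. apply IH.
Qed.

Lemma is_walk_app : forall l1 l2 u,
  is_walk adj u (l1 ++ l2) <-> is_walk adj u l1 /\ is_walk adj (last l1 u) l2.
Proof.
  induction l1 as [|a l1 IH]; intros l2 u; cbn [is_walk app].
  - tauto.
  - rewrite IH. rewrite last_cons'. tauto.
Qed.

Lemma reach_refl : forall u, reach_le adj u u 0.
Proof. intro u. exists []. simpl. auto. Qed.

Lemma reach_mono : forall u v m n, reach_le adj u v m -> m <= n -> reach_le adj u v n.
Proof. intros u v m n [l [H1 [H2 H3]]] Hmn. exists l. repeat split; auto; lia. Qed.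

Lemma reach_trans : forall u v w m n, reach_le adj u v m -> reach_le adj v w n ->
  reach_le adj u w (m + n).
Proof.
  intros u v w m n [l1 [H1 [H2 H3]]] [l2 [K1 [K2 K3]]].
  exists (l1 ++ l2). rewrite is_walk_app, last_app', length_app. subst. repeat split; auto; lia.
Qed.

Lemma reach_adj : forall u v, adj u v -> reach_le adj u v 1.
Proof. intros u v H. exists [v]. simpl. auto. Qed.

Lemma reach_1 : forall u v, reach_le adj u v 1 -> u = v \/ adj u v.
Proof.
  intros u v [l [H1 [H2 H3]]]. destruct l as [|a [|b l]]; simpl in *; auto; try lia.
  subst. tauto.
Qed.

Lemma reach_0 : forall u v, reach_le adj u v 0 -> u = v.
Proof. intros u v [l [H1 [H2 H3]]]. destruct l; simpl in *; auto; lia. Qed.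

Lemma walk_reach : forall l u, is_walk adj u l -> reach_le adj u (last l u) (length l).
Proof. intros l u H. exists l. auto. Qed.

Hypothesis Hsym : forall u v, adj u v -> adj v u.

Lemma reach_sym : forall u v n, reach_le adj u v n -> reach_le adj v u n.
Proof.
  intros u v n [l [H1 [H2 H3]]]. subst v. revert u n H1 H3.
  induction l as [|a l IH]; intros u n H1 H3; cbn [is_walk length] in *.
  - apply reach_mono with 0; [apply reach_refl|lia].
  - destruct H1 as [Ha Hw]. rewrite last_cons'.
    replace n with ((n - 1) + 1) by lia. eapply reach_trans.
    + apply IH; auto. lia.
    + apply reach_adj; auto.
Qed.

Lemma walk_nth_reach0 : forall l u d j, is_walk adj u l -> j <= length l ->
  reach_le adj u (nth j (u :: l) d) j.
Proof.
  induction l as [|a l IH]; intros u d j Hw Hj; simpl in *.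
  - assert (j = 0) by lia. subst. apply reach_refl.
  - destruct j as [|j]. apply reach_refl.
    destruct Hw as [Ha Hw]. replace (S j) with (1 + j) by lia.
    eapply reach_trans. apply reach_adj; eauto. apply IH; auto. lia.
Qed.

Lemma walk_nth_reach : forall l u d i j, is_walk adj u l -> i <= j -> j <= length l ->
  reach_le adj (nth i (u :: l) d) (nth j (u :: l) d) (j - i).
Proof.
  induction l as [|a l IH]; intros u d i j Hw Hij Hj; cbn [length] in *.
  - assert (i = 0) by lia; assert (j = 0) by lia. subst. apply reach_refl.
  - destruct i as [|i].
    + replace (j - 0) with j by lia. apply (walk_nth_reach0 (a :: l)); simpl; auto.
    + destruct j as [|j]; [lia|]. destruct Hw as [Ha Hw].
      replace (S j - S i) with (j - i) by lia.
      change (reach_le adj (nth i (a :: l) d) (nth j (a :: l) d) (j - i)).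
      apply IH; auto; lia.
Qed.

Lemma last_nth : forall l (u : V) d, last l u = nth (length l) (u :: l) d.
Proof.
  induction l as [|a l IH]; intros u d; [reflexivity|].
  rewrite last_cons', (IH a d). reflexivity.
Qed.

Lemma In_nth_iff : forall l (u d w : V), In w (u :: l) <-> exists i, i <= length l /\ w = nth i (u :: l) d.
Proof.
  intros l u d w. split.
  - intro H. apply (In_nth _ _ d) in H. destruct H as [n [Hn Hw]]. exists n. simpl in Hn. split; [lia|auto].
  - intros [i [Hi ->]]. apply nth_In. simpl. lia.
Qed.

Lemma walk_of_fun : forall (g : nat -> V) m k, (forall i, k <= i -> i < k + m -> adj (g i) (g (S i))) ->
  is_walk adj (g k) (map g (seq (S k) m)).
Proof.
  induction m as [|m IH]; intros k H; simpl; auto.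
  split. apply H; lia. apply IH. intros i Hi1 Hi2. apply H; lia.
Qed.

Lemma last_map_seq : forall (g : nat -> V) m k, last (map g (seq (S k) m)) (g k) = g (k + m).
Proof.
  induction m as [|m IH]; intros k; cbn [seq map].
  - simpl; f_equal; lia.
  - rewrite last_cons'. rewrite IH. f_equal; lia.
Qed.

Lemma In_map_seq : forall (g : nat -> V) m w, In w (g 0 :: map g (seq 1 m)) <-> exists i, i <= m /\ w = g i.
Proof.
  intros g m w. simpl. rewrite in_map_iff. split.
  - intros [H|[x [Hx Hin]]]. exists 0; split; auto; lia.
    apply in_seq in Hin. exists x. split; auto; lia.
  - intros [i [Hi ->]]. destruct i. auto. right. exists (S i). split; auto. apply in_seq. lia.
Qed.

End Walks.

Lemma nat_min : forall (Q : nat -> Prop), (exists n, Q n) -> exists n, Q n /\ forall m, Q m -> n <= m.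
Proof.
  intros Q [n Hn]. revert Hn. induction n as [n IH] using lt_wf_ind. intro Hn.
  destruct (classic (exists m, m < n /\ Q m)) as [[m [Hm HQ]]|Hno].
  - eapply IH; eauto.
  - exists n. split; auto. intros m Hm. destruct (le_lt_dec n m); auto. exfalso; eauto.
Qed.

Section Dist.
Context {V : Type} (adj : V -> V -> Prop) (Hsym : forall u v, adj u v -> adj v u)
  (Hc : connected adj).

Lemma ex_min_dist : forall u v, exists n, reach_le adj u v n /\ forall m, reach_le adj u v m -> n <= m.
Proof. intros u v. apply nat_min. apply Hc. Qed.

Definition dist (u v : V) : nat := proj1_sig (constructive_indefinite_description _ (ex_min_dist u v)).

Lemma dist_spec : forall u v, reach_le adj u v (dist u v).
Proof. intros u v. unfold dist. destruct (constructive_indefinite_description _ _) as [n [H1 H2]]. auto. Qed.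

Lemma dist_min : forall u v m, reach_le adj u v m -> dist u v <= m.
Proof. intros u v. unfold dist. destruct (constructive_indefinite_description _ _) as [n [H1 H2]]. auto. Qed.

Lemma dist_iff : forall u v n, reach_le adj u v n <-> dist u v <= n.
Proof. intros u v n. split. apply dist_min. intro H. eapply reach_mono. apply dist_spec. auto. Qed.

Lemma dist_tri : forall u v w, dist u w <= dist u v + dist v w.
Proof. intros. apply dist_min. eapply reach_trans; apply dist_spec. Qed.

Lemma dist_sym : forall u v, dist u v = dist v u.
Proof.
  intros u v. apply Nat.le_antisymm; apply dist_min; apply reach_sym; auto; apply dist_spec.
Qed.

Lemma dist_refl : forall u, dist u u = 0.
Proof. intros u. assert (H := dist_min u u 0 (reach_refl adj u)). lia. Qed.

Lemma dist_0 : forall u v, dist u v = 0 -> u = v.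
Proof. intros u v H. apply (reach_0 adj). rewrite <- H. apply dist_spec. Qed.

Lemma dist_le0 : forall u v, dist u v <= 0 -> u = v.
Proof. intros u v H. apply dist_0. lia. Qed.

Lemma dist_adj : forall u v, adj u v -> dist u v <= 1.
Proof. intros. apply dist_min, reach_adj; auto. Qed.

Lemma dist_1 : forall u v, dist u v = 1 -> adj u v.
Proof.
  intros u v H. destruct (reach_1 adj u v) as [E|E]; auto.
  rewrite <- H. apply dist_spec. subst. rewrite dist_refl in H. discriminate.
Qed.

Definition geo (g : nat -> V) (x y : V) (n : nat) : Prop :=
  g 0 = x /\ g n = y /\ forall i j, i <= n -> j <= n -> dist (g i) (g j) = (i - j) + (j - i).

Lemma geo_len : forall g x y n, geo g x y n -> dist x y = n.
Proof. intros g x y n [H1 [H2 H3]]. subst. rewrite H3; lia. Qed.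

Lemma geo_rev : forall g x y n, geo g x y n -> geo (fun i => g (n - i)) y x n.
Proof.
  intros g x y n [H1 [H2 H3]]. repeat split.
  - rewrite Nat.sub_0_r; auto.
  - rewrite Nat.sub_diag; auto.
  - intros i j Hi Hj. rewrite H3 by lia. lia.
Qed.

Lemma geo_sub : forall g x y n a b, geo g x y n -> a <= b -> b <= n ->
  geo (fun i => g (a + i)) (g a) (g b) (b - a).
Proof.
  intros g x y n a b [H1 [H2 H3]] Hab Hbn. repeat split.
  - rewrite Nat.add_0_r; auto.
  - f_equal; lia.
  - intros i j Hi Hj. rewrite H3 by lia. lia.
Qed.

Lemma geodesic_geo : forall x y l, geodesic adj x y l -> geo (fun i => nth i (x :: l) y) x y (length l).
Proof.
  intros x y l [Hw [Hl Hmin]]. split; [reflexivity|]. split.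
  { rewrite (last_nth l x y) in Hl. exact Hl. }
  - assert (Hd : dist x y = length l).
    { apply Nat.le_antisymm. apply dist_min. exists l; auto.
      destruct (dist_spec x y) as [l' [K1 [K2 K3]]]. specialize (Hmin l' K1 K2). lia. }
    intros i j Hi Hj.
    assert (Hle : forall i j, i <= j -> j <= length l -> dist (nth i (x :: l) y) (nth j (x :: l) y) = j - i).
    { clear i j Hi Hj. intros i j Hij Hj. apply Nat.le_antisymm.
      - apply dist_min. apply walk_nth_reach; auto.
      - assert (A1 : dist x (nth i (x :: l) y) <= i).
        { apply dist_min. pose proof (walk_nth_reach adj l x y 0 i Hw ltac:(lia) ltac:(lia)) as W.
          rewrite Nat.sub_0_r in W. exact W. }
        assert (A2 : dist (nth j (x :: l) y) y <= length l - j).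
        { apply dist_min. pose proof (walk_nth_reach adj l x y j (length l) Hw ltac:(lia) ltac:(lia)) as W.
          rewrite <- last_nth, Hl in W. exact W. }
        pose proof (dist_tri x (nth i (x :: l) y) y). pose proof (dist_tri (nth i (x :: l) y) (nth j (x :: l) y) y).
        lia. }
    destruct (le_lt_dec i j).
    + rewrite Hle; auto. lia.
    + rewrite dist_sym, Hle; auto; lia.
Qed.

Lemma geo_geodesic : forall g x y n, geo g x y n -> geodesic adj x y (map g (seq 1 n)).
Proof.
  intros g x y n Hg. pose proof (geo_len _ _ _ _ Hg) as Hd. destruct Hg as [H1 [H2 H3]].
  repeat split.
  - subst x. apply walk_of_fun. intros i Hi1 Hi2. apply dist_1. rewrite H3 by lia. lia.
  - subst. apply last_map_seq.
  - intros l' K1 K2. rewrite length_map, length_seq. rewrite <- Hd. apply dist_min. exists l'. auto.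
Qed.

Definition slimF (d : nat) : Prop :=
  forall x y z a b c n1 n2 n3, geo a x y n1 -> geo b y z n2 -> geo c z x n3 ->
  forall i, i <= n1 -> exists j, (j <= n2 /\ dist (a i) (b j) <= d) \/ (j <= n3 /\ dist (a i) (c j) <= d).

Lemma geo_exists : forall x y, exists g, geo g x y (dist x y).
Proof.
  intros x y. destruct (nat_min (fun n => exists l, is_walk adj x l /\ last l x = y /\ length l = n)) as [n [[l [K1 [K2 K3]]] Hm]].
  { destruct (Hc x y) as [n [l [K1 [K2 K3]]]]. eauto. }
  assert (Hg : geodesic adj x y l).
  { repeat split; auto. intros l' L1 L2. rewrite K3. apply Hm. eauto. }
  exists (fun i => nth i (x :: l) y). pose proof (geodesic_geo _ _ _ Hg) as G.
  rewrite (geo_len _ _ _ _ G). exact G.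
Qed.

Lemma hyp_slimF : hyperbolic adj -> exists d, slimF d.
Proof.
  intros [_ [d Hd]]. exists d. intros x y z a b c n1 n2 n3 Ha Hb Hcc i Hi.
  pose proof (Hd x y z _ _ _ (geo_geodesic _ _ _ _ Ha) (geo_geodesic _ _ _ _ Hb) (geo_geodesic _ _ _ _ Hcc) (a i)) as H.
  destruct Ha as [Ha0 [Ha1 _]]. destruct Hb as [Hb0 [Hb1 _]]. destruct Hcc as [Hc0 [Hc1 _]].
  destruct H as [w' [Hw' Hr]].
  - rewrite <- Ha0. apply In_map_seq. eauto.
  - rewrite <- Hb0, <- Hc0 in Hw'. destruct Hw' as [Hw'|Hw']; apply In_map_seq in Hw'; destruct Hw' as [j [Hj ->]];
    exists j; [left|right]; split; auto; apply dist_min; auto.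
Qed.

Lemma slimF_hyp : forall d, slimF d -> hyperbolic adj.
Proof.
  intros d Hd. split; auto. exists d. intros x y z lxy lyz lzx G1 G2 G3 w Hw.
  apply geodesic_geo in G1, G2, G3.
  apply (In_nth_iff _ _ y) in Hw. destruct Hw as [i [Hi ->]].
  destruct (Hd _ _ _ _ _ _ _ _ _ G1 G2 G3 i Hi) as [j [[Hj Hdj]|[Hj Hdj]]].
  - exists (nth j (y :: lyz) z). split. left. apply nth_In. simpl; lia. apply dist_iff; auto.
  - exists (nth j (z :: lzx) x). split. right. apply nth_In. simpl; lia. apply dist_iff; auto.
Qed.

End Dist.

Fixpoint fmin (f : nat -> nat) (n : nat) : nat :=
  match n with 0 => f 0 | S n' => Nat.min (fmin f n') (f (S n')) end.
Fixpoint fmax (f : nat -> nat) (n : nat) : nat :=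
  match n with 0 => f 0 | S n' => Nat.max (fmax f n') (f (S n')) end.

Lemma fmin_le : forall f n i, i <= n -> fmin f n <= f i.
Proof.
  induction n as [|n IH]; intros i Hi; simpl.
  - assert (i = 0) by lia; subst; lia.
  - destruct (Nat.eq_dec i (S n)). subst; lia. specialize (IH i ltac:(lia)). lia.
Qed.
Lemma fmin_att : forall f n, exists i, i <= n /\ fmin f n = f i.
Proof.
  induction n as [|n [i [Hi E]]]; simpl. exists 0; auto.
  destruct (Nat.le_ge_cases (fmin f n) (f (S n))).
  - exists i. split. lia. rewrite Nat.min_l; auto.
  - exists (S n). split. lia. rewrite Nat.min_r; auto.
Qed.
Lemma fmax_ge : forall f n i, i <= n -> f i <= fmax f n.
Proof.
  induction n as [|n IH]; intros i Hi; simpl.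
  - assert (i = 0) by lia; subst; lia.
  - destruct (Nat.eq_dec i (S n)). subst; lia. specialize (IH i ltac:(lia)). lia.
Qed.
Lemma fmax_att : forall f n, exists i, i <= n /\ fmax f n = f i.
Proof.
  induction n as [|n [i [Hi E]]]; simpl. exists 0; auto.
  destruct (Nat.le_ge_cases (fmax f n) (f (S n))).
  - exists (S n). split. lia. rewrite Nat.max_r; auto.
  - exists i. split. lia. rewrite Nat.max_l; auto.
Qed.

Lemma pow2_ge : forall k, 1 <= 2 ^ k.
Proof. induction k; simpl; lia. Qed.

Lemma log_exists : forall N, exists k, N <= 2 ^ k /\ 2 ^ k <= 2 * N + 1.
Proof.
  induction N as [|N [k [H1 H2]]].
  - exists 0. simpl. lia.
  - destruct (le_lt_dec (S N) (2 ^ k)).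
    + exists k. lia.
    + exists (S k). simpl. pose proof (pow2_ge k). lia.
Qed.

Lemma sq_pow : forall k, k * k <= 4 * 2 ^ k.
Proof.
  induction k as [|k IH]. simpl; lia.
  destruct (le_lt_dec k 2) as [Hk|Hk].
  - destruct k as [|[|[|]]]; simpl; lia.
  - simpl. nia.
Qed.

Lemma exp_lin : forall a b, exists K0, forall k, 2 ^ k <= a * k + b -> k <= K0.
Proof.
  intros a b. exists (4 * a + 4 * b + 1). intros k Hk. pose proof (sq_pow k).
  destruct (le_lt_dec k (4 * a + 4 * b + 1)); auto. nia.
Qed.

Definition pconcat {V : Type} (f : nat -> V) (n : nat) (f' : nat -> V) : nat -> V :=
  fun i => if i <=? n then f i else f' (i - n).

Section Morse.
Context {V : Type} (adj : V -> V -> Prop) (Hsym : forall u v, adj u v -> adj v u)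
  (Hc : connected adj) (delta : nat) (Hslim : slimF adj Hc delta).

Notation d := (dist adj Hc).
Notation geo := (geo adj Hc).

Definition lazy (c : nat -> V) (N : nat) : Prop := forall i, i < N -> d (c i) (c (S i)) <= 1.

Lemma lazy_dist : forall c N i j, lazy c N -> i <= j -> j <= N -> d (c i) (c j) <= j - i.
Proof.
  intros c N i j Hl Hij HjN. induction j as [|j IH].
  - assert (i = 0) by lia. subst. rewrite dist_refl; auto.
  - destruct (Nat.eq_dec i (S j)). subst. rewrite dist_refl; auto. lia.
    pose proof (dist_tri adj Hc (c i) (c j) (c (S j))). specialize (IH ltac:(lia) ltac:(lia)).
    specialize (Hl j ltac:(lia)). lia.
Qed.

Lemma lazy_concat : forall f n f' n', lazy f n -> lazy f' n' -> f n = f' 0 ->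
  lazy (pconcat f n f') (n + n').
Proof.
  intros f n f' n' H1 H2 E i Hi. unfold pconcat.
  destruct (le_lt_dec (S i) n).
  - rewrite (proj2 (Nat.leb_le i n)) by lia. rewrite (proj2 (Nat.leb_le (S i) n)) by lia. apply H1; lia.
  - destruct (Nat.eq_dec i n).
    + subst. rewrite Nat.leb_refl. rewrite (proj2 (Nat.leb_gt (S n) n)) by lia.
      replace (S n - n) with 1 by lia. rewrite E. apply H2. lia.
    + rewrite (proj2 (Nat.leb_gt i n)) by lia. rewrite (proj2 (Nat.leb_gt (S i) n)) by lia.
      replace (S i - n) with (S (i - n)) by lia. apply H2. lia.
Qed.

Lemma geo_lazy : forall g x y m, geo g x y m -> lazy g m.
Proof. intros g x y m [_ [_ H]] i Hi. rewrite H by lia. lia. Qed.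

Lemma geo_dist : forall g x y m i j, geo g x y m -> i <= m -> j <= m -> d (g i) (g j) = (i - j) + (j - i).
Proof. intros g x y m i j [_ [_ H]]. auto. Qed.

Lemma bisect : forall k N c g m, N <= 2 ^ k -> lazy c N -> geo g (c 0) (c N) m ->
  forall t, t <= m -> exists i, i <= N /\ d (g t) (c i) <= delta * k + 1.
Proof.
  induction k as [|k IH]; intros N c g m HN Hl Hg t Ht.
  - simpl in HN. exists 0. split. lia.
    pose proof (geo_len adj Hc _ _ _ _ Hg) as Hm. pose proof (lazy_dist c N 0 N Hl ltac:(lia) ltac:(lia)).
    destruct Hg as [G0 [G1 G2]]. rewrite <- G0. rewrite G2 by lia. lia.
  - set (M := Nat.min N (2 ^ k)).
    assert (HM1 : M <= 2 ^ k) by lia. assert (HM2 : N - M <= 2 ^ k) by (simpl in HN; lia).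
    destruct (geo_exists adj Hsym Hc (c 0) (c M)) as [g1 Hg1].
    destruct (geo_exists adj Hsym Hc (c M) (c N)) as [g2 Hg2].
    set (n1 := d (c 0) (c M)) in *. set (n2 := d (c M) (c N)) in *.
    pose proof (geo_rev adj Hc _ _ _ _ Hg1) as Hr1.
    pose proof (geo_rev adj Hc _ _ _ _ Hg2) as Hr2.
    destruct (Hslim _ _ _ _ _ _ _ _ _ Hg Hr2 Hr1 t Ht) as [j [[Hj Hdj]|[Hj Hdj]]].
    + set (c2 := fun i => c (M + i)).
      assert (Hg2' : geo g2 (c2 0) (c2 (N - M)) n2).
      { unfold c2. rewrite Nat.add_0_r. replace (M + (N - M)) with N by lia. exact Hg2. }
      assert (Hl2 : lazy c2 (N - M)).
      { intros i Hi. unfold c2. replace (M + S i) with (S (M + i)) by lia. apply Hl. lia. }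
      destruct (IH _ _ _ _ HM2 Hl2 Hg2' (n2 - j) ltac:(lia)) as [i [Hi Hdi]].
      exists (M + i). split. lia.
      pose proof (dist_tri adj Hc (g t) (g2 (n2 - j)) (c (M + i))). unfold c2 in Hdi. nia.
    + assert (Hl1 : lazy c M) by (intros i Hi; apply Hl; lia).
      destruct (IH _ _ _ _ HM1 Hl1 Hg1 (n1 - j) ltac:(lia)) as [i [Hi Hdi]].
      exists i. split. lia.
      pose proof (dist_tri adj Hc (g t) (g1 (n1 - j)) (c i)). nia.
Qed.

Variable K : nat.
Definition qgeo (c : nat -> V) (N : nat) : Prop :=
  forall i j, i <= j -> j <= N -> j - i <= K * d (c i) (c j) + K.

Lemma morse_core : forall c N g m, lazy c N -> qgeo c N -> geo g (c 0) (c N) m ->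
  exists k, 2 ^ k <= 2 * ((6 * K + 2) * fmax (fun t => fmin (fun i => d (g t) (c i)) N) m + K) + 1 /\
            fmax (fun t => fmin (fun i => d (g t) (c i)) N) m <= delta * k + 1.
Proof.
  intros c N g m Hl Hq Hg.
  set (e := fun t => fmin (fun i => d (g t) (c i)) N).
  set (D := fmax e m).
  destruct (fmax_att e m) as [t0 [Ht0 ED]]. fold D in ED.
  assert (He : forall t i, t <= m -> i <= N -> e t <= d (g t) (c i)).
  { intros t i Ht Hi. unfold e. apply (fmin_le (fun i => d (g t) (c i))). auto. }
  assert (HeD : forall t, t <= m -> e t <= D) by (intros; apply fmax_ge; auto).
  assert (Heatt : forall t, exists i, i <= N /\ e t = d (g t) (c i)).
  { intros t. apply (fmin_att (fun i => d (g t) (c i))). }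
  destruct Hg as [G0 [G1 G2]].
  set (t1 := t0 - 2 * D). set (t2 := Nat.min (t0 + 2 * D) m).
  assert (P1 : exists i1, i1 <= N /\ d (g t1) (c i1) <= D /\ (d (g t1) (c i1) = 0 \/ t0 - t1 = 2 * D)).
  { destruct (le_lt_dec (2 * D) t0).
    - destruct (Heatt t1) as [i1 [Hi1 E1]]. exists i1. split; auto. split. rewrite <- E1. apply HeD. lia.
      right. unfold t1. lia.
    - exists 0. split. lia. replace t1 with 0 by (unfold t1; lia). rewrite G0, dist_refl. split; lia. }
  assert (P2 : exists i2, i2 <= N /\ d (c i2) (g t2) <= D /\ (d (c i2) (g t2) = 0 \/ t2 - t0 = 2 * D)).
  { destruct (le_lt_dec (t0 + 2 * D) m).
    - destruct (Heatt t2) as [i2 [Hi2 E2]]. exists i2. split; auto. rewrite (dist_sym adj Hsym). split. rewrite <- E2. apply HeD. unfold t2. lia.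
      right. unfold t2. lia.
    - exists N. split. lia. replace t2 with m by (unfold t2; lia). rewrite G1, dist_refl. split; lia. }
  destruct P1 as [i1 [Hi1 [Hd1 C1]]]. destruct P2 as [i2 [Hi2 [Hd2 C2]]].
  destruct (geo_exists adj Hsym Hc (g t1) (c i1)) as [h1 Hh1].
  destruct (geo_exists adj Hsym Hc (c i2) (g t2)) as [h2 Hh2].
  set (p1 := d (g t1) (c i1)) in *. set (p2 := d (c i2) (g t2)) in *.
  set (q := (i2 - i1) + (i1 - i2)).
  set (s := fun i => if i1 <=? i2 then c (i1 + i) else c (i1 - i)).
  assert (Hs0 : s 0 = c i1).
  { unfold s. destruct (i1 <=? i2); f_equal; lia. }
  assert (Hsq : s q = c i2).
  { unfold s, q. destruct (i1 <=? i2) eqn:E; [apply Nat.leb_le in E|apply Nat.leb_gt in E]; f_equal; lia. }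
  assert (Hsin : forall r, r <= q -> exists i, i <= N /\ s r = c i).
  { intros r Hr. unfold s, q in *. destruct (i1 <=? i2) eqn:E; [apply Nat.leb_le in E|apply Nat.leb_gt in E];
    eexists; split; [|reflexivity| |reflexivity]; lia. }
  assert (Hls : lazy s q).
  { intros r Hr. unfold s, q in *. destruct (i1 <=? i2) eqn:E; [apply Nat.leb_le in E|apply Nat.leb_gt in E].
    - replace (i1 + S r) with (S (i1 + r)) by lia. apply Hl. lia.
    - rewrite (dist_sym adj Hsym). replace (i1 - r) with (S (i1 - S r)) by lia. apply Hl. lia. }
  set (Pth := pconcat h1 p1 (pconcat s q h2)).
  assert (HlP : lazy Pth (p1 + (q + p2))).
  { apply lazy_concat. eapply geo_lazy; eauto. apply lazy_concat; auto. eapply geo_lazy; eauto.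
    rewrite Hsq. destruct Hh2 as [-> _]. auto.
    unfold pconcat. simpl. rewrite Hs0. destruct Hh1 as [_ [-> _]]. auto. }
  assert (HP0 : Pth 0 = g t1).
  { unfold Pth, pconcat. simpl. destruct Hh1 as [-> _]. auto. }
  assert (HPend : Pth (p1 + (q + p2)) = g t2).
  { unfold Pth, pconcat. destruct (Nat.eqb_spec p2 0) as [E|E].
    - destruct (Nat.eqb_spec q 0) as [E'|E'].
      + rewrite E, E'. rewrite !Nat.add_0_r. rewrite Nat.leb_refl. destruct Hh1 as [_ [-> _]].
        destruct Hh2 as [H20 [H21 _]]. rewrite E in H21. rewrite <- H21, H20.
        rewrite <- Hsq, E'. rewrite <- Hs0. auto.
      + rewrite (proj2 (Nat.leb_gt _ _)) by lia. replace (p1 + (q + p2) - p1) with q by lia.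
        rewrite Nat.leb_refl. rewrite Hsq. destruct Hh2 as [H20 [H21 _]]. rewrite E in H21. rewrite <- H21, H20. auto.
    - rewrite (proj2 (Nat.leb_gt _ _)) by lia. rewrite (proj2 (Nat.leb_gt _ _)) by lia.
      replace (p1 + (q + p2) - p1 - q) with p2 by lia. destruct Hh2 as [_ [-> _]]. auto. }
  assert (Ht12 : t1 <= t0 /\ t0 <= t2 /\ t2 <= m) by (unfold t1, t2; lia).
  pose proof (geo_sub adj Hc g (c 0) (c N) m t1 t2 (conj G0 (conj G1 G2)) ltac:(lia) ltac:(lia)) as Hgs.
  rewrite <- HP0, <- HPend in Hgs.
  destruct (log_exists (p1 + (q + p2))) as [k [Hk1 Hk2]].
  destruct (bisect k _ _ _ _ Hk1 HlP Hgs (t0 - t1) ltac:(lia)) as [r [Hr Hdr]].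
  replace (t1 + (t0 - t1)) with t0 in Hdr by lia.
  assert (Hfar : D <= d (g t0) (Pth r)).
  { unfold Pth, pconcat. destruct (r <=? p1) eqn:E1; [apply Nat.leb_le in E1|apply Nat.leb_gt in E1].
    - destruct C1 as [C1|C1].
      + assert (r = 0) by (fold p1 in C1; lia). subst r. destruct Hh1 as [-> _].
        apply dist_0 in C1. rewrite C1. rewrite ED. apply He; auto.
      + pose proof (dist_tri adj Hc (g t0) (h1 r) (g t1)).
        rewrite (geo_dist g (c 0) (c N) m t0 t1) in H; [|repeat split; auto|lia|lia].
        rewrite (dist_sym adj Hsym Hc (h1 r)) in H. destruct Hh1 as [H10 [H11 H12]].
        rewrite <- H10 in H. rewrite H12 in H by lia. lia.
    - destruct (r - p1 <=? q) eqn:E2; [apply Nat.leb_le in E2|apply Nat.leb_gt in E2].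
      + destruct (Hsin (r - p1) E2) as [i [Hi ->]]. rewrite ED. apply He; auto.
      + destruct C2 as [C2|C2].
        * assert (r - p1 - q = 0) by (fold p2 in C2; lia). rewrite H. destruct Hh2 as [-> _].
          rewrite ED. apply He; auto.
        * pose proof (dist_tri adj Hc (g t0) (h2 (r - p1 - q)) (g t2)).
          rewrite (geo_dist g (c 0) (c N) m t0 t2) in H; [|repeat split; auto|lia|lia].
          destruct Hh2 as [H20 [H21 H22]]. rewrite <- H21 in H. rewrite H22 in H by lia. lia. }
  assert (HD : D <= delta * k + 1) by lia.
  exists k. split; [|exact HD].
  assert (Hqb : q <= K * (6 * D) + K).
  { assert (Hd12 : d (c i1) (c i2) <= 6 * D).
    { pose proof (dist_tri adj Hc (c i1) (g t1) (c i2)). pose proof (dist_tri adj Hc (g t1) (g t0) (c i2)).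
      pose proof (dist_tri adj Hc (g t0) (g t2) (c i2)).
      rewrite (dist_sym adj Hsym Hc (c i1) (g t1)) in H. rewrite (dist_sym adj Hsym Hc (g t2) (c i2)) in H1.
      rewrite (geo_dist g (c 0) (c N) m t1 t0) in H0; [|repeat split; auto|lia|lia].
      rewrite (geo_dist g (c 0) (c N) m t0 t2) in H1; [|repeat split; auto|lia|lia].
      unfold p1, p2, t1, t2 in *. lia. }
    unfold q. destruct (le_lt_dec i1 i2).
    - pose proof (Hq i1 i2 l ltac:(lia)). nia.
    - pose proof (Hq i2 i1 ltac:(lia) ltac:(lia)). rewrite (dist_sym adj Hsym) in Hd12. nia. }
  fold e. fold D. nia.
Qed.

Lemma morse : exists D0, forall c N g m, lazy c N -> qgeo c N -> geo g (c 0) (c N) m ->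
  forall t, t <= m -> exists i, i <= N /\ d (g t) (c i) <= D0.
Proof.
  destruct (exp_lin (2 * (6 * K + 2) * delta) (2 * (6 * K + 2) + 2 * K + 1)) as [K0 HK0].
  exists (delta * K0 + 1). intros c N g m Hl Hq Hg t Ht.
  destruct (morse_core c N g m Hl Hq Hg) as [k [Hk1 Hk2]].
  set (D := fmax _ m) in *.
  assert (k <= K0).
  { apply HK0. assert ((6 * K + 2) * D <= (6 * K + 2) * (delta * k + 1)) by (apply Nat.mul_le_mono_l; auto). nia. }
  destruct (fmin_att (fun i => d (g t) (c i)) N) as [i [Hi E]].
  exists i. split; auto. rewrite <- E.
  pose proof (fmax_ge (fun t => fmin (fun i => d (g t) (c i)) N) m t Ht). fold D in H0. nia.
Qed.

Lemma morse_rev : exists R, forall c N g m, lazy c N -> qgeo c N -> geo g (c 0) (c N) m ->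
  forall p, p <= N -> exists t, t <= m /\ d (c p) (g t) <= R.
Proof.
  destruct morse as [D0 HD0]. exists (K * (2 * D0 + 1) + K + D0).
  intros c N g m Hl Hq Hg p Hp.
  destruct (nat_min (fun j => j <= m /\ exists s, p <= s /\ s <= N /\ d (g j) (c s) <= D0)) as [j0 [[Hj0 [s [Hs1 [Hs2 Hds]]]] Hmin]].
  { exists m. split; auto. exists N. split; auto. split; auto. destruct Hg as [_ [-> _]]. rewrite dist_refl. lia. }
  destruct j0 as [|j'].
  - exists 0. split. lia. destruct Hg as [G0 _]. rewrite G0 in Hds.
    pose proof (Hq 0 s ltac:(lia) Hs2). pose proof (lazy_dist c N 0 p Hl ltac:(lia) ltac:(lia)).
    rewrite G0, (dist_sym adj Hsym). nia.
  - destruct (HD0 c N g m Hl Hq Hg j' ltac:(lia)) as [s' [Hs' Hds']].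
    destruct (le_lt_dec p s') as [Hps|Hps].
    + exfalso. assert (S j' <= j') by (apply Hmin; split; [lia|]; exists s'; auto). lia.
    + exists j'. split. lia.
      assert (Hd : d (c s') (c s) <= 2 * D0 + 1).
      { pose proof (dist_tri adj Hc (c s') (g j') (c s)). pose proof (dist_tri adj Hc (g j') (g (S j')) (c s)).
        rewrite (geo_dist g (c 0) (c N) m j' (S j') Hg ltac:(lia) ltac:(lia)) in H0. rewrite (dist_sym adj Hsym Hc (c s') (g j')) in H. lia. }
      pose proof (Hq s' s ltac:(lia) Hs2).
      pose proof (lazy_dist c N s' p Hl ltac:(lia) ltac:(lia)).
      pose proof (dist_tri adj Hc (c p) (c s') (g j')). rewrite (dist_sym adj Hsym Hc (c p) (c s')) in H1. rewrite (dist_sym adj Hsym Hc (c s') (g j')) in H1.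
      nia.
Qed.

End Morse.

Section Transfer.
Context {V : Type} (adj0 adj1 : V -> V -> Prop)
  (Hsym0 : forall u v, adj0 u v -> adj0 v u) (Hsym1 : forall u v, adj1 u v -> adj1 v u)
  (Hincl : forall u v, adj0 u v -> adj1 u v) (L : nat) (HL1 : 1 <= L)
  (HL : forall u v, adj1 u v -> reach_le adj0 u v L)
  (Hc0 : connected adj0).

Lemma walk_incl : forall l u, is_walk adj0 u l -> is_walk adj1 u l.
Proof. induction l; simpl; intuition. Qed.

Lemma reach_incl : forall u v n, reach_le adj0 u v n -> reach_le adj1 u v n.
Proof. intros u v n [l [H1 H2]]. exists l. split; auto. apply walk_incl; auto. Qed.

Lemma Hc1 : connected adj1.
Proof. intros u v. destruct (Hc0 u v) as [n Hn]. exists n. apply reach_incl; auto. Qed.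

Notation d0 := (dist adj0 Hc0).
Notation d1 := (dist adj1 Hc1).

Lemma d1_le_d0 : forall u v, d1 u v <= d0 u v.
Proof. intros. apply dist_min. apply reach_incl. apply dist_spec. Qed.

Lemma nth_after : forall (l : list V) u v r, last l u = v -> length l <= r -> nth r (u :: l) v = v.
Proof.
  intros l u v r Hl Hr. destruct (Nat.eq_dec r (length l)).
  - subst. rewrite <- last_nth. auto.
  - apply nth_overflow. simpl. lia.
Qed.

Lemma exW : forall u v, exists f : nat -> V, adj1 u v ->
  f 0 = u /\ f L = v /\ lazy adj0 Hc0 f L.
Proof.
  intros u v. destruct (classic (adj1 u v)) as [H|H].
  - destruct (HL u v H) as [l [Hw [Hl Hlen]]]. exists (fun r => nth r (u :: l) v). intros _.
    split; [reflexivity|]. split. apply nth_after; auto.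
    intros r Hr. destruct (le_lt_dec (length l) r).
    + rewrite !nth_after; auto. rewrite dist_refl. lia.
    + apply dist_min. replace 1 with (S r - r) by lia. apply walk_nth_reach; auto; lia.
  - exists (fun _ => u). intro; contradiction.
Qed.

Definition W (u v : V) : nat -> V := proj1_sig (constructive_indefinite_description _ (exW u v)).

Lemma W_spec : forall u v, adj1 u v -> W u v 0 = u /\ W u v L = v /\ lazy adj0 Hc0 (W u v) L.
Proof. intros u v. unfold W. destruct (constructive_indefinite_description _ _) as [f Hf]. auto. Qed.

Fixpoint build (a : nat -> V) (k : nat) : nat -> V :=
  match k with
  | 0 => fun _ => a 0
  | S k' => pconcat (build a k') (k' * L) (W (a k') (a (S k')))
  end.

Lemma build_prefix : forall a k i, i <= k * L -> build a (S k) i = build a k i.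
Proof. intros a k i Hi. simpl. unfold pconcat. rewrite (proj2 (Nat.leb_le _ _)) by lia. auto. Qed.

Lemma build_props : forall a n, (forall k, k < n -> adj1 (a k) (a (S k))) ->
  forall k, k <= n ->
  (forall j, j <= k -> build a k (j * L) = a j) /\
  lazy adj0 Hc0 (build a k) (k * L) /\
  (forall i, i <= k * L -> exists j, j <= k /\ j * L <= i /\ i <= j * L + L /\ d1 (build a k i) (a j) <= L).
Proof.
  intros a n Ha. induction k as [|k IH]; intros Hk.
  - simpl. split; [|split].
    + intros j Hj. assert (j = 0) by lia. subst. auto.
    + intros i Hi. lia.
    + intros i Hi. exists 0. split; [lia|]. split; [lia|]. split; [lia|]. rewrite dist_refl. lia.
  - destruct (IH ltac:(lia)) as [B1 [B2 B3]]. destruct (W_spec _ _ (Ha k ltac:(lia))) as [W0 [WL Wl]].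
    assert (Hseg : forall r, r <= L -> build a (S k) (k * L + r) = W (a k) (a (S k)) r).
    { intros r Hr. simpl. unfold pconcat. destruct (Nat.eq_dec r 0).
      - subst. rewrite Nat.add_0_r, Nat.leb_refl. rewrite W0. replace (k * L) with (k * L) by lia. apply B1; lia.
      - rewrite (proj2 (Nat.leb_gt _ _)) by lia. f_equal. lia. }
    split; [|split].
    + intros j Hj. destruct (Nat.eq_dec j (S k)).
      * subst. replace (S k * L) with (k * L + L) by lia. rewrite Hseg by lia. auto.
      * rewrite build_prefix by nia. apply B1. lia.
    + replace (S k * L) with (k * L + L) by lia. simpl.
      apply lazy_concat; auto. rewrite W0. apply B1; lia.
    + intros i Hi. destruct (le_lt_dec i (k * L)).
      * rewrite build_prefix by lia. destruct (B3 i l) as [j [J1 J2]]. exists j. split; auto.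
      * exists k. split; [lia|]. split; [lia|]. split; [nia|].
        replace i with (k * L + (i - k * L)) by lia. rewrite Hseg by nia.
        eapply Nat.le_trans. apply d1_le_d0. rewrite <- W0 at 2. rewrite (dist_sym adj0 Hsym0 Hc0).
        eapply Nat.le_trans. apply (lazy_dist adj0 Hc0 _ L 0 (i - k * L) Wl); nia. nia.
Qed.

Lemma build_path : forall a x y n, geo adj1 Hc1 a x y n ->
  build a n 0 = x /\ build a n (n * L) = y /\ lazy adj0 Hc0 (build a n) (n * L) /\
  (forall j, j <= n -> build a n (j * L) = a j) /\
  (forall i, i <= n * L -> exists j, j <= n /\ d1 (build a n i) (a j) <= L) /\
  qgeo adj0 Hc0 (2 * L * L + L) (build a n) (n * L).
Proof.
  intros a x y n Hg. assert (Ha : forall k, k < n -> adj1 (a k) (a (S k))).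
  { intros k Hk. apply (dist_1 adj1 Hc1). destruct Hg as [_ [_ G]]. rewrite G by lia. lia. }
  destruct (build_props a n Ha n (le_n n)) as [B1 [B2 B3]].
  destruct Hg as [G0 [G1 G2]].
  split. { rewrite <- G0. apply (B1 0). lia. }
  split. { rewrite <- G1. apply B1. lia. }
  split; auto. split; auto. split.
  { intros i Hi. destruct (B3 i Hi) as [j [J1 [_ [_ J4]]]]. eauto. }
  intros i j Hij Hj. destruct (B3 i ltac:(lia)) as [ji [I1 [I2 [I3 I4]]]].
  destruct (B3 j Hj) as [jj [J1 [J2 [J3 J4]]]].
  set (c := build a n) in *.
  assert (Hjj : (ji - jj) + (jj - ji) <= 2 * L + d0 (c i) (c j)).
  { rewrite <- G2 by lia. pose proof (dist_tri adj1 Hc1 (a ji) (c i) (a jj)).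
    pose proof (dist_tri adj1 Hc1 (c i) (c j) (a jj)). pose proof (d1_le_d0 (c i) (c j)).
    rewrite (dist_sym adj1 Hsym1 Hc1 (a ji) (c i)) in H. lia. }
  nia.
Qed.

Theorem hyp_transfer : hyperbolic adj0 -> hyperbolic adj1.
Proof.
  intros Hh. destruct (hyp_slimF adj0 Hc0 Hh) as [dl Hdl].
  set (K := 2 * L * L + L).
  destruct (morse adj0 Hsym0 Hc0 dl Hdl K) as [D0 HD0].
  destruct (morse_rev adj0 Hsym0 Hc0 dl Hdl K) as [R HR].
  apply (slimF_hyp adj1 Hsym1 Hc1 (R + dl + D0 + L)).
  intros x y z a b c n1 n2 n3 Ga Gb Gc i Hi.
  destruct (build_path a x y n1 Ga) as [A0 [A1 [A2 [A3 [A4 A5]]]]].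
  destruct (build_path b y z n2 Gb) as [B0 [B1 [B2 [B3 [B4 B5]]]]].
  destruct (build_path c z x n3 Gc) as [C0 [C1 [C2 [C3 [C4 C5]]]]].
  set (ca := build a n1) in *. set (cb := build b n2) in *. set (cc := build c n3) in *.
  destruct (geo_exists adj0 Hsym0 Hc0 x y) as [ga Hga'].
  destruct (geo_exists adj0 Hsym0 Hc0 y z) as [gb Hgb'].
  destruct (geo_exists adj0 Hsym0 Hc0 z x) as [gc Hgc'].
  assert (Hga : geo adj0 Hc0 ga (ca 0) (ca (n1 * L)) (d0 x y)) by (rewrite A0, A1; exact Hga').
  assert (Hgb : geo adj0 Hc0 gb (cb 0) (cb (n2 * L)) (d0 y z)) by (rewrite B0, B1; exact Hgb').
  assert (Hgc : geo adj0 Hc0 gc (cc 0) (cc (n3 * L)) (d0 z x)) by (rewrite C0, C1; exact Hgc').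
  destruct (HR ca (n1 * L) ga _ A2 A5 Hga (i * L) ltac:(nia)) as [t [Ht Hdt]].
  rewrite A3 in Hdt by lia.
  destruct (Hdl _ _ _ _ _ _ _ _ _ Hga' Hgb' Hgc' t Ht) as [t' [[Ht' Hd']|[Ht' Hd']]].
  - destruct (HD0 cb (n2 * L) gb _ B2 B5 Hgb t' Ht') as [q [Hq Hdq]].
    destruct (B4 q Hq) as [j [Hj Hdj]]. exists j. left. split; auto.
    pose proof (dist_tri adj1 Hc1 (a i) (ga t) (b j)).
    pose proof (dist_tri adj1 Hc1 (ga t) (gb t') (b j)).
    pose proof (dist_tri adj1 Hc1 (gb t') (cb q) (b j)).
    pose proof (d1_le_d0 (a i) (ga t)). pose proof (d1_le_d0 (ga t) (gb t')). pose proof (d1_le_d0 (gb t') (cb q)).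
    lia.
  - destruct (HD0 cc (n3 * L) gc _ C2 C5 Hgc t' Ht') as [q [Hq Hdq]].
    destruct (C4 q Hq) as [j [Hj Hdj]]. exists j. right. split; auto.
    pose proof (dist_tri adj1 Hc1 (a i) (ga t) (c j)).
    pose proof (dist_tri adj1 Hc1 (ga t) (gc t') (c j)).
    pose proof (dist_tri adj1 Hc1 (gc t') (cc q) (c j)).
    pose proof (d1_le_d0 (a i) (ga t)). pose proof (d1_le_d0 (ga t) (gc t')). pose proof (d1_le_d0 (gc t') (cc q)).
    lia.
Qed.

End Transfer.

Section Grp.
Context (G : Grp).

Lemma gcancel : forall g a b : G, gmul g a = gmul g b -> a = b.
Proof.
  intros g a b H. rewrite <- (gmul1l _ a), <- (gmul1l _ b), <- (gmulVl _ g), <- !gassoc, H. reflexivity.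
Qed.

Lemma gunit_uniq : forall g a : G, gmul g a = a -> g = gone.
Proof.
  intros g a H. rewrite <- (gmul1r _ g), <- (gmulVr _ a), gassoc, H. reflexivity.
Qed.

Lemma gsolve : forall g a b : G, gmul g a = b -> g = gmul b (ginv a).
Proof. intros g a b H. rewrite <- H, <- gassoc, gmulVr, gmul1r. reflexivity. Qed.

Lemma ginv_shift : forall g h y : G, g = gmul h y -> h = gmul g (ginv y).
Proof. intros g h y H. rewrite H, <- gassoc, gmulVr, gmul1r. reflexivity. Qed.

End Grp.

Section Coned.
Context (G : Grp) (I : Type) (P : I -> G -> Prop) (X Y : G -> Prop)
  (HPsub : forall i, subgroup (P i)).

Notation V := (CVert G I P).
Notation adj0 := (coned_adj G I P X).
Notation adj1 := (coned_adj_plus G I P X Y).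
Notation act := (cact G I P).

Lemma sym0 : forall u v, adj0 u v -> adj0 v u.
Proof.
  intros [a|c] [b|c']; simpl; auto.
  intros [x [Hx [E|E]]]; exists x; auto.
Qed.

Lemma sym1 : forall u v, adj1 u v -> adj1 v u.
Proof.
  intros u v [H|H]. left; apply sym0; auto.
  right. destruct u as [a|c], v as [b|c']; auto.
  destruct H as [y [Hy [E|E]]]; exists y; auto.
Qed.

Lemma incl01 : forall u v, adj0 u v -> adj1 u v.
Proof. intros; left; auto. Qed.

Lemma act0 : forall g u v, adj0 u v -> adj0 (act g u) (act g v).
Proof.
  intros g [a|[i [C pf]]] [b|[j [C' pf']]]; simpl; auto.
  - intros [x [Hx [E|E]]]; exists x; split; auto; [left|right]; rewrite E, gassoc; auto.
  - intro H. rewrite gassoc, gmulVl, gmul1l. auto.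
  - intro H. rewrite gassoc, gmulVl, gmul1l. auto.
Qed.

Lemma actY : forall g u v, adj1 u v -> adj1 (act g u) (act g v).
Proof.
  intros g u v [H|H]. left; apply act0; auto.
  right. destruct u as [a|[i [C pf]]], v as [b|[j [C' pf']]]; simpl in *; auto.
  destruct H as [y [Hy [E|E]]]; exists y; split; auto; [left|right]; rewrite E, gassoc; auto.
Qed.

Lemma act_inl : forall g p b, act g p = inl b -> exists u, p = inl u /\ b = gmul g u.
Proof.
  intros g [u|[i [C pf]]] b H; simpl in H. injection H; intros; subst; eauto. discriminate.
Qed.

Lemma nbr_inl : forall c z, adj0 (inr c) z -> exists b, z = inl b.
Proof. intros c [b|c'] H; simpl in H; eauto. contradiction. Qed.

Definition cone (i : I) (a : G) : V :=
  inr (existT _ i (exist _ (fun h => exists p, P i p /\ h = gmul a p)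
        (ex_intro _ a (fun h => iff_refl _)))).

Lemma cone_adj : forall i a p, P i p -> adj0 (inl (gmul a p)) (cone i a).
Proof. intros i a p Hp. simpl. eauto. Qed.

Lemma cone_adj1 : forall i a, adj0 (inl a) (cone i a).
Proof.
  intros i a. pose proof (cone_adj i a gone (proj1 (HPsub i))). rewrite gmul1r in H. auto.
Qed.

Lemma cay_step : forall g h, cay_adj (gen_all P X) g h -> reach_le adj0 (inl g) (inl h) 2.
Proof.
  intros g h [z [[Hz|[i Hz]] [E|E]]].
  - apply reach_mono with 1; [apply reach_adj; simpl; eauto|lia].
  - apply reach_mono with 1; [apply reach_adj; simpl; eauto|lia].
  - replace 2 with (1 + 1) by lia. apply reach_trans with (cone i g); apply reach_adj.
    apply cone_adj1. apply sym0. subst. apply cone_adj; auto.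
  - replace 2 with (1 + 1) by lia. apply reach_trans with (cone i h); apply reach_adj.
    subst. apply cone_adj; auto. apply sym0. apply cone_adj1.
Qed.

Lemma cay_walk : forall l g, is_walk (cay_adj (gen_all P X)) g l ->
  reach_le adj0 (inl g) (inl (last l g)) (2 * length l).
Proof.
  induction l as [|a l IH]; intros g H; simpl in H.
  - apply reach_refl.
  - destruct H as [H1 H2]. rewrite last_cons'. cbn [length].
    replace (2 * S (length l)) with (2 + 2 * length l) by lia.
    eapply reach_trans. apply cay_step; eauto. apply IH; auto.
Qed.

Lemma last_map' : forall {A B : Type} (f : A -> B) (l : list A) u, last (map f l) (f u) = f (last l u).
Proof.
  intros A B f l. induction l as [|a l IH]; intros u; [reflexivity|].
  cbn [map]. rewrite !last_cons'. apply IH.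
Qed.

Lemma walk_map : forall g l u, is_walk adj0 u l -> is_walk adj0 (act g u) (map (act g) l).
Proof.
  induction l as [|a l IH]; intros u H; simpl in *; auto. destruct H; split; auto. apply act0; auto.
Qed.

Hypothesis Hcay : connected (cay_adj (gen_all P X)).

Lemma conn_one : forall y, exists s, is_walk adj0 (inl gone) s /\ last s (inl gone) = inl y.
Proof.
  intros y. destruct (Hcay gone y) as [n [l [H1 [H2 H3]]]].
  destruct (cay_walk l gone H1) as [s [K1 [K2 K3]]]. rewrite H2 in K2. eauto.
Qed.

Lemma family : forall ly : list G, exists (S : list (list V)) (L : nat), 1 <= L /\
  (forall s, In s S -> is_walk adj0 (inl gone) s /\ length s <= L) /\
  (forall y, In y ly -> (exists s, In s S /\ last s (inl gone) = inl y) /\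
                        (exists s, In s S /\ last s (inl gone) = inl (ginv y))).
Proof.
  induction ly as [|y ly [S [L [HL1 [HL2 HL3]]]]].
  - exists [], 1. split; auto. split; simpl; tauto.
  - destruct (conn_one y) as [s1 [W1 E1]]. destruct (conn_one (ginv y)) as [s2 [W2 E2]].
    exists (s1 :: s2 :: S), (L + length s1 + length s2). split; [lia|]. split.
    + intros s [<-|[<-|Hs]]. split; auto; lia. split; auto; lia. apply HL2 in Hs. split. tauto. lia.
    + intros y' [<-|Hy]. split; eexists; split; eauto; simpl; auto.
      destruct (HL3 y' Hy) as [[s [Hs Es]] [s' [Hs' Es']]]. split; [exists s|exists s']; simpl; auto.
Qed.

End Coned.

Lemma fin_sub : forall {T : Type} (S1 S2 : T -> Prop), finite_set S1 -> (forall a, S2 a -> S1 a) -> finite_set S2.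
Proof. intros T S1 S2 [l Hl] H. exists l. auto. Qed.

Lemma fin_union : forall {T : Type} (A : list T) (Tb : T -> T -> Prop),
  (forall b, In b A -> finite_set (Tb b)) -> finite_set (fun a => exists b, In b A /\ Tb b a).
Proof.
  intros T A Tb. induction A as [|b A IH]; intros H.
  - exists []. intros a [b [[] _]].
  - destruct (H b (or_introl eq_refl)) as [l1 Hl1]. destruct IH as [l2 Hl2]. intros; apply H; simpl; auto.
    exists (l1 ++ l2). intros a [b' [[<-|Hb] Ht]]; apply in_or_app; [left|right]; eauto.
Qed.

Lemma last_In : forall {T : Type} (l : list T) d, In (last l d) (d :: l).
Proof.
  intros T l. induction l as [|a l IH]; intros d; [simpl; auto|].
  rewrite last_cons'. right. apply IH.
Qed.

Lemma split_first : forall {T : Type} (v : T) l, In v l -> exists l1 l2, l = l1 ++ v :: l2 /\ ~ In v l1.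
Proof.
  intros T v l. induction l as [|a l IH]; intros H; [destruct H|].
  destruct (classic (a = v)) as [E|E].
  - subst. exists [], l. simpl. auto.
  - destruct H as [H|H]; [contradiction|]. destruct (IH H) as [l1 [l2 [-> Hn]]].
    exists (a :: l1), l2. split; auto. simpl. intros [H'|H']; auto.
Qed.

Lemma split_last : forall {T : Type} (v : T) l, In v l -> exists l1 l2, l = l1 ++ v :: l2 /\ ~ In v l2.
Proof.
  intros T v l. induction l as [|a l IH]; intros H; [destruct H|].
  destruct (classic (In v l)) as [Hl|Hl].
  - destruct (IH Hl) as [l1 [l2 [-> Hn]]]. exists (a :: l1), l2. auto.
  - destruct H as [H|H]; [|contradiction]. subst. exists [], l. auto.
Qed.

Lemma avoid_walk : forall {T : Type} (adj : T -> T -> Prop) v l u,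
  is_walk adj u l -> u <> v -> ~ In v l -> is_walk (avoid_adj adj v) u l.
Proof.
  intros T adj v l. induction l as [|a l IH]; intros u H Hu Hn; simpl in *; auto.
  destruct H as [H1 H2]. split. unfold avoid_adj. split; auto. apply IH; auto.
Qed.

Lemma reach_incl_gen : forall {T : Type} (a1 a2 : T -> T -> Prop), (forall u v, a1 u v -> a2 u v) ->
  forall u v n, reach_le a1 u v n -> reach_le a2 u v n.
Proof.
  intros T a1 a2 Hi u v n [l [H1 H2]]. exists l. split; auto. clear H2. revert u H1.
  induction l; simpl; intuition.
Qed.

Section Main.
Context (G : Grp) (I : Type) (P : I -> G -> Prop) (X Y : G -> Prop)
  (HPsub : forall i, subgroup (P i)).

Notation V := (CVert G I P).
Notation adj0 := (coned_adj G I P X).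
Notation adj1 := (coned_adj_plus G I P X Y).
Notation act := (cact G I P).

Variables (Sg : list (list V)) (L : nat) (ly : list G).
Hypotheses (HL1 : 1 <= L)
  (HL2 : forall s, In s Sg -> is_walk adj0 (inl gone) s /\ length s <= L)
  (HL3 : forall y, In y ly -> (exists s, In s Sg /\ last s (inl gone) = inl y) /\
                        (exists s, In s Sg /\ last s (inl gone) = inl (ginv y)))
  (HY : forall y, Y y -> In y ly).

Lemma act_inl_eq : forall g a, act g (inl a) = inl (gmul g a).
Proof. reflexivity. Qed.

Lemma Yedge : forall g h, (exists y, Y y /\ (h = gmul g y \/ g = gmul h y)) ->
  exists s, In s Sg /\ is_walk adj0 (inl g) (map (act g) s) /\ last (map (act g) s) (inl g) = inl h.
Proof.
  intros g h [y [Hy E]].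
  assert (Hgen : forall s z, In s Sg -> last s (inl gone) = inl z -> h = gmul g z ->
    exists s, In s Sg /\ is_walk adj0 (inl g) (map (act g) s) /\ last (map (act g) s) (inl g) = inl h).
  { intros s z Hs Ez Eh. exists s. split; auto.
    pose proof (walk_map G I P X g s (inl gone) (proj1 (HL2 s Hs))) as W.
    pose proof (last_map' (act g) s (inl gone)) as Lm.
    rewrite act_inl_eq, gmul1r in W, Lm. split; auto. rewrite Lm, Ez, Eh. reflexivity. }
  destruct (HL3 y (HY y Hy)) as [[s1 [H1 E1]] [s2 [H2 E2]]].
  destruct E as [E|E].
  - apply (Hgen s1 y H1 E1 E).
  - apply (Hgen s2 (ginv y) H2 E2 (ginv_shift G _ _ _ E)).
Qed.

Lemma HLbound : forall u v, adj1 u v -> reach_le adj0 u v L.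
Proof.
  intros u v [H|H].
  - apply reach_mono with 1. apply reach_adj; auto. lia.
  - destruct u as [g|c], v as [h|c']; try contradiction.
    destruct (Yedge g h H) as [s [Hs [W E]]]. exists (map (act g) s). split; auto. split; auto.
    rewrite length_map. apply HL2; auto.
Qed.

Lemma expand : forall l u, is_walk adj1 u l -> reach_le adj0 u (last l u) (L * length l).
Proof.
  induction l as [|a l IH]; intros u H; simpl in H.
  - apply reach_mono with 0; [apply reach_refl|simpl; lia].
  - destruct H as [H1 H2]. rewrite last_cons'. cbn [length].
    replace (L * S (length l)) with (L + L * length l) by lia.
    eapply reach_trans. apply HLbound; eauto. apply IH; auto.
Qed.

Lemma QI : quasi_isometric adj0 adj1.
Proof.
  exists (fun u => u), L, 0. split; [|split].
  - intros u v n H. apply reach_mono with n. apply (reach_incl_gen adj0); auto. apply incl01. nia.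
  - intros u v n [l [H1 [H2 H3]]]. subst v. apply reach_mono with (L * length l). apply expand; auto. nia.
  - intros w. exists w. apply reach_refl.
Qed.

Definition inls (l : list V) : list G :=
  flat_map (fun p => match p with inl u => [u] | inr _ => [] end) l.

Lemma in_inls : forall l u, In (inl u) l -> In u (inls l).
Proof. intros l u H. unfold inls. apply in_flat_map. exists (inl u). simpl; auto. Qed.

Definition Fset : list G :=
  flat_map (fun s => flat_map (fun u => map (fun u' => gmul (ginv u) u') (inls (inl gone :: s)))
                              (inls (inl gone :: s))) Sg.

Lemma inF : forall s u u', In s Sg -> In (inl u) (inl gone :: s) -> In (inl u') (inl gone :: s) ->
  In (gmul (ginv u) u') Fset.
Proof.
  intros s u u' Hs H1 H2. unfold Fset. apply in_flat_map. exists s. split; auto.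
  apply in_flat_map. exists u. split. apply in_inls; auto. apply in_map_iff. exists u'. split; auto. apply in_inls; auto.
Qed.

Section Fine.
Variable cv : {i : I & {C : G -> Prop | is_lcoset (P i) C}}.
Notation v := (@inr G _ cv : V).
Hypothesis Hfine0 : fine_at adj0 v.

Definition Nbr (a : V) := adj0 v a /\ a <> v.
Definition Ball (b : V) (m : nat) (a : V) := adj0 v a /\ a <> v /\ reach_le (avoid_adj adj0 v) b a m.

Lemma ball_fin : forall b m, Nbr b -> finite_set (Ball b m).
Proof. intros b m [H1 H2]. apply Hfine0; auto. Qed.

Definition Inv (x : V) (k : nat) (Sk : V -> Prop) : Prop :=
  finite_set Sk /\ (forall a, Sk a -> Nbr a) /\
  forall l, is_walk (avoid_adj adj1 v) x l -> length l <= k ->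
    exists a, Sk a /\ reach_le (avoid_adj adj0 v) a (last l x) (L * k).

Lemma inv_all : forall x, Nbr x -> forall k, exists Sk, Inv x k Sk.
Proof.
  intros x Hx k. induction k as [|k [Sk [[A HA] [HN HW]]]].
  - exists (fun a => a = x). split; [|split].
    + exists [x]. intros a ->. simpl; auto.
    + intros a ->. auto.
    + intros l _ Hl. destruct l; [|simpl in Hl; lia]. exists x. split; auto. apply reach_mono with 0; [apply reach_refl|lia].
  -
    set (Sk' := fun a => Nbr a /\ (Sk a \/ (exists b, Sk b /\ Ball b (L * S k) a) \/
                 (exists b b' f, Sk b /\ Ball b (L * S k) (inl b') /\ In f Fset /\ a = inl (gmul b' f)))).
    exists Sk'. split; [|split].
    + assert (FB : finite_set (fun a => exists b, In b A /\ (Sk b /\ Ball b (L * S k) a))).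
      { apply fin_union. intros b _. destruct (classic (Sk b)) as [Hb|Hb].
        - apply fin_sub with (Ball b (L * S k)). apply ball_fin; auto. intros a [_ H]; auto.
        - exists []. intros a [H _]; contradiction. }
      destruct FB as [BL HBL].
      exists (A ++ BL ++ flat_map (fun e => match e with inl b' => map (fun f => inl (gmul b' f)) Fset | inr _ => [] end) BL).
      intros a [_ [H|[[b [Hb Hab]]|[b [b' [f [Hb [Hbb [Hf ->]]]]]]]]]; apply in_or_app.
      * left; auto.
      * right; apply in_or_app; left. apply HBL. eauto.
      * right; apply in_or_app; right. apply in_flat_map. exists (inl b'). split.
        apply HBL. eauto. apply in_map_iff. eauto.
    + intros a [H _]; auto.
    + intros l Hw Hl. destruct (le_lt_dec (length l) k) as [Hk|Hk].
      * destruct (HW l Hw Hk) as [a [Ha Hr]]. exists a. split. split; auto. apply reach_mono with (L * k); auto. nia.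
      * assert (Hne : l <> []) by (intro E; subst; simpl in Hk; lia).
        destruct (exists_last Hne) as [l' [w' E]]. subst l.
        rewrite length_app in Hl, Hk. simpl in Hl, Hk.
        apply is_walk_app in Hw. destruct Hw as [Hw' [Hww' _]].
        destruct (HW l' Hw' ltac:(lia)) as [a [Ha Hr]].
        rewrite last_last. set (w := last l' x) in *.
        destruct Hww' as [[H0|HY'] [Hwv Hw'v]].
        { exists a. split. split; auto. replace (L * S k) with (L * k + (L * S k - L * k)) by nia.
          eapply reach_trans; eauto. apply reach_mono with 1. apply reach_adj. split; auto. nia. }
        destruct w as [g|c]; [|contradiction]. destruct w' as [h|c']; [|contradiction].
        destruct (Yedge g h HY') as [s [Hs [Wt Et]]].
        set (tau := map (act g) s) in *.
        assert (Hlt : length tau <= L) by (unfold tau; rewrite length_map; apply HL2; auto).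
        assert (Htin : forall e, In e (inl g :: tau) -> exists p, In p (inl gone :: s) /\ e = act g p).
        { intros e [He|He]. exists (inl gone). split. left; auto. rewrite act_inl_eq, gmul1r; auto.
          unfold tau in He. apply in_map_iff in He. destruct He as [p [Ep Hp]]. exists p. split; auto. right; auto. }
        destruct (classic (In v tau)) as [Hin|Hnin].
        -- destruct (split_first v tau Hin) as [t1 [t2 [E1 N1]]].
           destruct (split_last v tau Hin) as [t3 [t4 [E3 N3]]].
           set (a2 := last t1 (inl g)).
           assert (W1 := Wt). rewrite E1 in W1. apply is_walk_app in W1. destruct W1 as [W1 [Ha2v _]]. fold a2 in Ha2v.
           assert (Ha2in : In a2 (inl g :: tau)).
           { pose proof (last_In t1 (inl g)). fold a2 in H. destruct H as [H|H]. left; auto. right. rewrite E1. apply in_or_app; auto. }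
           assert (Ha2ne : a2 <> v). { intro E. pose proof (last_In t1 (inl g)). fold a2 in H. rewrite E in H. destruct H as [H|H]. discriminate. contradiction. }
           assert (Hball : Ball a (L * S k) a2).
           { split. apply sym0; auto. split; auto.
             replace (L * S k) with (L * k + (L * S k - L * k)) by nia.
             eapply reach_trans; eauto. apply reach_mono with (length t1).
             exists t1. split; [apply avoid_walk; [exact W1| intro E; discriminate | exact N1]|]. split; [reflexivity|lia].
             assert (length tau = length t1 + S (length t2)) by (rewrite E1, length_app; simpl; lia). nia. }
           destruct t4 as [|a1 t5].
           { exfalso. rewrite E3 in Et. rewrite last_app' in Et. simpl in Et. discriminate. }
           assert (W3 := Wt). rewrite E3 in W3. apply is_walk_app in W3. destruct W3 as [_ [_ [Ha1 W5]]].
           assert (Ha1ne : a1 <> v) by (intro E; apply N3; left; auto).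
           assert (Ha1in : In a1 (inl g :: tau)) by (right; rewrite E3; apply in_or_app; right; right; left; auto).
           destruct (nbr_inl G I P X _ _ (sym0 G I P X _ _ Ha2v)) as [b2 Eb2].
           destruct (nbr_inl G I P X _ _ Ha1) as [b1 Eb1].
           destruct (Htin _ Ha2in) as [p2 [Hp2 Ep2]]. destruct (Htin _ Ha1in) as [p1 [Hp1 Ep1]].
           rewrite Eb2 in Ep2. rewrite Eb1 in Ep1. symmetry in Ep1, Ep2.
           destruct (act_inl G I P g p2 b2 Ep2) as [u2 [-> Eu2]].
           destruct (act_inl G I P g p1 b1 Ep1) as [u1 [-> Eu1]].
           exists a1. split.
           ++ split. split; auto. right; right. exists a, b2, (gmul (ginv u2) u1). split; auto. split.
              rewrite <- Eb2; auto. split. apply (inF s); auto.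
              rewrite Eb1, Eu1, Eu2. f_equal. rewrite <- !gassoc. rewrite (gassoc _ u2), gmulVr, gmul1l. reflexivity.
           ++ assert (Hl5 : last t5 a1 = inl h).
              { rewrite E3, last_app' in Et. rewrite !last_cons' in Et. exact Et. }
              rewrite <- Hl5. apply reach_mono with (length t5). exists t5.
              split; [apply avoid_walk; [exact W5|exact Ha1ne|intro E; apply N3; right; exact E]|]. split; [reflexivity|lia].
              assert (length tau = length t3 + S (S (length t5))) by (rewrite E3, length_app; simpl; lia). nia.
        -- exists a. split. split; auto. rewrite <- Et.
           replace (L * S k) with (L * k + (L * S k - L * k)) by nia.
           eapply reach_trans; eauto. apply reach_mono with (length tau).
           exists tau. split; [apply avoid_walk; [exact Wt|exact Hwv|exact Hnin]|]. split; [reflexivity|nia].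
           nia.
Qed.

Lemma fine1 : fine_at adj1 v.
Proof.
  intros x n Hx Hxv.
  assert (Hx0 : adj0 v x) by (destruct Hx as [H|H]; auto; contradiction).
  destruct (inv_all x (conj Hx0 Hxv) n) as [Sn [[A HA] [HN HW]]].
  apply fin_sub with (fun a => exists b, In b A /\ (Sn b /\ Ball b (L * n) a)).
  { apply fin_union. intros b _. destruct (classic (Sn b)) as [Hb|Hb].
    - apply fin_sub with (Ball b (L * n)). apply ball_fin; auto. intros a [_ H]; auto.
    - exists []. intros a [H _]; contradiction. }
  intros y [Hy [Hyv [l [Hw [Hl Hlen]]]]].
  destruct (HW l Hw Hlen) as [a [Ha Hr]]. exists a. split; auto. split; auto.
  split. destruct Hy as [H|H]; auto; contradiction. split; auto. rewrite <- Hl; auto.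
Qed.

End Fine.

End Main.

Theorem lemma2p13 (G : Grp) (I : Type) (P : I -> G -> Prop) (X Y : G -> Prop)
  (HPsub : forall i, subgroup (P i))
  (HPinf : forall i, ~ finite_set (P i))
  (Hemb : hyp_emb G I P X)
  (HY : finite_set Y) :
  quasi_isometric (coned_adj G I P X) (coned_adj_plus G I P X Y) /\
  (GP_graph G I P (CVert G I P) (cact G I P) (coned_adj G I P X) ->
   GP_graph G I P (CVert G I P) (cact G I P) (coned_adj_plus G I P X Y)) /\
  (thick_GP_graph G I P (CVert G I P) (cact G I P) (coned_adj G I P X) ->
   thick_GP_graph G I P (CVert G I P) (cact G I P) (coned_adj_plus G I P X Y)).
Proof.
  destruct Hemb as [_ [[Hcay _] _]]. destruct HY as [ly Hly].
  destruct (family G I P X Y HPsub Hcay ly) as [Sg [L [HL1 [HL2 HL3]]]].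
  assert (GP1 : GP_graph G I P (CVert G I P) (cact G I P) (coned_adj G I P X) ->
   GP_graph G I P (CVert G I P) (cact G I P) (coned_adj_plus G I P X Y)).
  { intros [A1 [A2 [A3 [Hh [Orb [Stab [PSt [ESt Fn]]]]]]]].
    split; auto. split; auto. split.
    { intros g u w. split. apply actY. intros [H|H]. left. apply (A3 g u w). auto.
      right. destruct u as [a|[i [C pf]]], w as [b|[j [C' pf']]]; simpl in H |- *; try contradiction.
      destruct H as [y [Hy [E|E]]]; exists y; split; auto; [left|right]; apply (gcancel G g); rewrite E, gassoc; reflexivity. }
    split. { exact (hyp_transfer _ _ (sym0 G I P X) (sym1 G I P X Y) (incl01 G I P X Y) L HL1
                     (HLbound G I P X Y Sg L ly HL1 HL2 HL3 Hly) (proj1 Hh) Hh). }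
    split; auto. split; auto. split; auto. split.
    { intros u w [H|H]. apply ESt; auto.
      destruct u as [a|c], w as [b|c']; try contradiction.
      exists [gone; gmul b (ginv a)]. intros g [[E1 E2]|[E1 E2]]; simpl in E1; injection E1; intro E.
      - left. symmetry. apply (gunit_uniq G g a E).
      - right; left. symmetry. apply (gsolve G g a b E). }
    intros [a|cv] Hinf.
    - exfalso. apply Hinf. exists [gone]. intros g Hg. unfold stab in Hg. simpl in Hg. injection Hg; intro E.
      left. symmetry. apply (gunit_uniq G g a E).
    - apply (fine1 G I P X Y Sg L ly HL1 HL2 HL3 Hly cv). apply Fn; auto. }
  split; [|split].
  - apply (QI G I P X Y Sg L ly HL1 HL2 HL3 Hly).
  - exact GP1.
  - intros [GP [Hfin [u0 [T1 [T2 [T3 T4]]]]]]. split. apply GP1; auto. split; auto. exists u0.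
    split; auto. split.
    { intros i; destruct (T2 i) as [v [H1 H2]]; exists v; split; [left; auto|auto]. }
    split.
    { destruct T3 as [S' [H1 H2]]. exists S'. split; auto. intros; left; auto. }
    destruct T4 as [reps [R1 [R2 [R3 [R4 R5]]]]]. exists reps. repeat split; auto. intros; left; auto.
Qed.
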